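(* Let $n\ge2$ and $1\le r\le n-1$, and let $M$ be an invertible real $n\times n$ matrix. Let $\mathcal{M}$ be the set of all $P\in\mathbb{R}^{r\times(n-r)}$ such that $$\begin{pmatrix}\mathrm{Id}_r&P\\0&\mathrm{Id}_{n-r}\end{pmatrix}^{-1}M\begin{pmatrix}\mathrm{Id}_r&P\\0&\mathrm{Id}_{n-r}\end{pmatrix}=\begin{pmatrix}*&*\\ *&\hat M\end{pmatrix}$$ with $\hat M$ (the bottom-right $(n-r)\times(n-r)$ block) invertible. Then $\mathcal{M}$ is open and dense in $\mathbb{R}^{r\times(n-r)}$. *)

(* Defs.v *)
From HB Require Import structures.
From mathcomp Require Import all_boot all_order all_algebra.
From mathcomp Require Import all_classical all_reals all_analysis.
Set Implicit Arguments. Unset Strict Implicit. Unset Printing Implicit Defensive.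
Import Order.TTheory GRing.Theory Num.Theory.
Import numFieldNormedType.Exports.
Local Open Scope ring_scope.
Local Open Scope classical_set_scope.

Definition shear_mx (R : comUnitRingType) (r k : nat) (P : 'M[R]_(r, k))
  : 'M[R]_(r + k) := block_mx 1%:M P 0 1%:M.

Definition good_set (R : realType) (r k : nat) (M : 'M[R]_(r + k))
  : set 'M[R]_(r, k) :=
  [set P | drsubmx (invmx (shear_mx P) *m M *m shear_mx P) \in unitmx].

(* Main.v *)
Require Import Defs.
From HB Require Import structures.
From mathcomp Require Import all_boot all_order all_algebra.
From mathcomp Require Import all_classical all_reals all_analysis.
Import Order.TTheory GRing.Theory Num.Theory.
Import numFieldNormedType.Exports.
Local Open Scope ring_scope.
Local Open Scope classical_set_scope.

Lemma shear_inv (R : comUnitRingType) r k (P : 'M[R]_(r, k)) :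
  invmx (shear_mx P) = block_mx 1%:M (- P) 0 1%:M.
Proof.
have h : shear_mx P *m block_mx 1%:M (- P) 0 1%:M = 1%:M.
  rewrite /shear_mx mulmx_block !mulmx0 !mul0mx !mulmx1 !mul1mx !addr0 !add0r.
  by rewrite addrC subrr scalar_mx_block.
have [u _] := mulmx1_unit h.
by rewrite -[RHS]mul1mx -(mulVmx u) -mulmxA h mulmx1.
Qed.

Lemma good_dr (R : comUnitRingType) r k (P : 'M[R]_(r, k)) M :
  drsubmx (invmx (shear_mx P) *m M *m shear_mx P) = dlsubmx M *m P + drsubmx M.
Proof.
rewrite shear_inv /shear_mx -[M]submxK !mulmx_block block_mxKdr.
by rewrite !mulmx0 !mul0mx !mulmx1 !mul1mx !addr0 !add0r !block_mxKdl !block_mxKdr.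
Qed.
Section C.
Variables (R : realType) (T : topologicalType).

Lemma cont_sum I (s : seq I) (F : I -> T -> R) :
  (forall i, continuous (F i)) -> continuous (fun x => \sum_(i <- s) F i x).
Proof.
move=> hF; elim: s => [|a s IH].
  under eq_fun do rewrite big_nil. exact: cst_continuous.
under eq_fun do rewrite big_cons.
by move=> x; apply: continuousD; [exact: hF | exact: IH].
Qed.

Lemma cont_prod I (s : seq I) (F : I -> T -> R) :
  (forall i, continuous (F i)) -> continuous (fun x => \prod_(i <- s) F i x).
Proof.
move=> hF; elim: s => [|a s IH].
  under eq_fun do rewrite big_nil. exact: cst_continuous.
under eq_fun do rewrite big_cons.
by move=> x; apply: continuousM; [exact: hF | exact: IH].
Qed.

Lemma cont_mul (f g : T -> R) : continuous f -> continuous g ->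
  continuous (fun x => f x * g x).
Proof. by move=> hf hg x; apply: continuousM; [exact: hf | exact: hg]. Qed.

Lemma cont_det n (f : T -> 'M[R]_n) :
  (forall i j, continuous (fun x => f x i j)) -> continuous (fun x => \det (f x)).
Proof.
move=> hf; rewrite /determinant.
apply: cont_sum => s.
apply: (@cont_mul (fun _ => _)); first exact: cst_continuous.
by apply: cont_prod => i; apply: hf.
Qed.
End C.
Lemma poly_nonroot (R : realType) (p : {poly R}) e : p != 0 -> 0 < e ->
  exists t, 0 < t < e /\ ~~ root p t.
Proof.
move=> p0 e0.
set rs := [seq e / (i.+2)%:R | i <- iota 0 (size p)].
have : ~~ all (root p) rs.
  apply/negP => hall.
  have hu : uniq rs.
    rewrite map_inj_uniq ?iota_uniq // => i j.
    move/(mulfI (lt0r_neq0 e0))/invr_inj/eqP; rewrite eqr_nat => /eqP [] //.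
  by have := max_poly_roots p0 hall hu; rewrite size_map size_iota ltnn.
case/allPn => t /mapP [i _ ->] hr; exists (e / i.+2%:R); split => //.
apply/andP; split; first by rewrite divr_gt0 // ltr0n.
by rewrite ltr_pdivrMr ?ltr0n // ltr_pMr // ltr1n.
Qed.

Arguments poly_nonroot {R p e}.

Definition pm (R : comNzRingType) k (A B : 'M[R]_k) : {poly R} :=
  \det (map_mx polyC A + 'X *: map_mx polyC B).

Arguments pm {R k}.

Lemma pm_eval (R : comNzRingType) k (A B : 'M[R]_k) t :
  (pm A B).[t] = \det (A + t *: B).
Proof.
rewrite /pm -horner_evalE -det_map_mx; congr (\det _); apply/matrixP => i j.
by rewrite !mxE /= horner_evalE !hornerE.
Qed.

Arguments pm_eval {R k}.

Lemma cont_add (R : realType) (T : topologicalType) (f g : T -> R) :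
  continuous f -> continuous g -> continuous (fun x => f x + g x).
Proof. by move=> hf hg x; apply: continuousD; [exact: hf | exact: hg]. Qed.

Lemma exists_P1 (R : realType) r k (M : 'M[R]_(r + k)) : M \in unitmx ->
  exists P, \det (dlsubmx M *m P + drsubmx M) != 0.
Proof.
move=> hM.
have hCD : dlsubmx M *m ursubmx (invmx M) + drsubmx M *m drsubmx (invmx M) = 1%:M.
  have h0 := mulmxV hM.
  rewrite -{1}[M]submxK -[invmx M]submxK mulmx_block scalar_mx_block in h0.
  by case/eq_block_mx: h0.
set C := dlsubmx M; set D := drsubmx M.
set B' := ursubmx (invmx M); set D' := drsubmx (invmx M).
have q1 : pm 1%:M D != 0.
  apply/negP => /eqP h; have := @pm_eval _ _ 1%:M D 0.
  by rewrite h horner0 scale0r addr0 det1 => /eqP; rewrite eq_sym oner_eq0.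
have q2 : pm D' 1%:M != 0.
  have -> : pm D' 1%:M = char_poly (- D').
    by rewrite /pm /char_poly /char_poly_mx map_mxN opprK addrC map_mx1 scalemx1.
  exact: monic_neq0 (char_poly_monic _).
have [s [_ hs]] := poly_nonroot (mulf_neq0 q1 q2) ltr01.
move: hs; rewrite rootM negb_or => /andP [h1 h2].
rewrite rootE (pm_eval _ _ _) in h1; rewrite rootE (pm_eval _ _ _) in h2.
set Qs := D' + s *: 1%:M.
have uQ : Qs \in unitmx by rewrite unitmxE unitfE.
exists (B' *m invmx Qs).
have -> : C *m (B' *m invmx Qs) + D = (1%:M + s *: D) *m invmx Qs.
  rewrite -[D in LHS](mulmxK uQ) mulmxA -mulmxDl; congr (_ *m _).
  by rewrite /Qs mulmxDr addrA hCD -scalemxAr mulmx1.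
by rewrite det_mulmx det_inv mulf_neq0 // invr_eq0.
Qed.

Theorem lemma5 (R : realType) (r k : nat) (hr : (1 <= r)%N) (hk : (1 <= k)%N)
  (M : 'M[R]_(r + k)) (hM : M \in unitmx) :
  open (good_set M) /\ dense (good_set M).
Proof.
set C := dlsubmx M; set D := drsubmx M.
have gE : forall P, good_set M P <-> \det (C *m P + D) != 0.
  by move=> P; rewrite /good_set /= good_dr unitmxE unitfE.
split.
  have -> : good_set M = (fun P => \det (C *m P + D)) @^-1` [set x | x != 0].
    by apply/funext => P; apply/propext; rewrite gE.
  apply: open_comp; last exact: open_neq.
  move=> P _; apply: cont_det => i j.
  under eq_fun do rewrite !mxE.
  apply: cont_add; last exact: cst_continuous.
  apply: cont_sum => l.
  apply: (@cont_mul _ _ (fun _ => _)); first exact: cst_continuous.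
  exact: coord_continuous.
move=> O [P0 OP0] oO.
have : nbhs P0 O by apply: open_nbhs_nbhs; split.
move=> /nbhs_ballP [e e0 hb].
have [P1 hP1] := @exists_P1 _ _ _ M hM.
set Q := P1 - P0.
set p := pm (C *m P0 + D) (C *m Q).
have hpt t : p.[t] = \det (C *m (P0 + t *: Q) + D).
  by rewrite pm_eval [in RHS]mulmxDr -scalemxAr addrAC.
have p0 : p != 0.
  apply/negP => /eqP h; have := hpt 1.
  rewrite h horner0 scale1r /Q [P0 + _]addrC subrK => h0.
  by move: hP1; rewrite -/C -/D -h0 eqxx.
have e'0 : 0 < e / (`|Q| + 1) by rewrite divr_gt0 // ltr_wpDl.
have [t [/andP [t0 te] hrt]] := poly_nonroot p0 e'0.
exists (P0 + t *: Q); split.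
  apply: hb; rewrite -ball_normE /ball_ /= opprD addNKr normrN normrZ gtr0_norm //.
  rewrite ltr_pdivlMr ?ltr_wpDl // in te.
  apply: le_lt_trans te; apply: ler_wpM2l; [exact: ltW | by rewrite lerDl ler01].
apply gE; by rewrite -hpt -rootE.
Qed.
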